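(* Let $n\ge2$ and $\mathcal{W}=\mathcal{W}_{\lambda_-,\lambda_+}$ with $\lambda_-\le\lambda_+\in(-1,1)$. Consider a performance evaluation setting $\mathcal{S}_n=\{n,\mathcal{A},K,\mathcal{P},\mathcal{F},\mathcal{I},\mathcal{W}\}$ in which the algorithm $\mathcal{A}\in\mathcal{A}_d$, the performance measure $\mathcal{P}$, the initial conditions $\mathcal{I}$ and the interpolation constraints for $\mathcal{F}$ are linearly (or LMI) Gram-representable, and assume all the agents are equivalent in the PEP. Then: 1. The computation of $w(\mathcal{S}_n)$ can be formulated as an SDP with variables $f^A\in\mathbb{R}^q$, $G^A\in\mathbb{R}^{p\times p}$, $G^C\in\mathbb{R}^{p\times p}$, whose size is independent of $n$. 2. If, in addition, $\mathcal{P}$ is scale-invariant and $\mathcal{I}$ only contains single-agent constraints (each applied to every agent $i$) and scale-invariant constraints, then the resulting SDP and its optimal value $w(\mathcal{S}_n)$ are independent of $n$.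
   Context: Distributed optimization: $n$ agents with local functions $f_i:\mathbb{R}^d\to\mathbb{R}$ minimize $f(x)=\frac1n\sum_if_i(x)$. $\mathcal{A}_d$ is the class of algorithms built from (i) local gradient evaluations $g_i=\nabla f_i(x_i)$ at any local variable, (ii) consensus steps $\mathbf{y}=(W\otimes I_d)\mathbf{x}$ (i.e. $y_i=\sum_jw_{ij}x_j$) with $W\in\mathcal{W}$, (iii) linear combinations of an agent's local variables with coefficients known in advance. $\mathcal{W}_{\lambda_-,\lambda_+}$ is the set of symmetric $W\in\mathbb{R}^{n\times n}$ with $\lambda_1(W)=1$, eigenvector $\mathbf{1}/\sqrt n$, other eigenvalues in $[\lambda_-,\lambda_+]$. The setting $\mathcal{S}_n$ specifies $n$, the algorithm $\mathcal{A}$, the number of iterations $K$, the performance criterion $\mathcal{P}$, the class $\mathcal{F}$ of local functions, the initial conditions $\mathcal{I}$, and $\mathcal{W}$. Agent-dependent SDP PEP: each agent $i$ holds $p$ vector variables (iterates, consensus outputs, gradients at these points, and copies of points common to all agents such as the minimizer $x^*$ with $\nabla f_i(x^* )$), gathered as columns of $P_i\in\mathbb{R}^{d\times p}$ in a common order, and $q$ function values in $f_i\in\mathbb{R}^q$; variables $F=[f_1^T\dots f_n^T]$, $G=P^TP\succeq0$, $P=[P_1\dots P_n]$, $G_{ij}=P_i^TP_j$. An expression or constraint is linearly (resp. LMI) Gram-representable if it is given by finitely many linear (resp. linear matrix inequality) constraints or expressions in $(F,G)$. The PEP maximizes $\mathcal{P}(F,G)$ subject to $G\succeq0$, the algorithm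 constraints, interpolation constraints for $\mathcal{F}$ on each agent's triplets (point, gradient, value), the initial conditions, the optimality condition $\frac1n\sum_i\nabla f_i(x^* )=0$, and, for each set of consensus steps using a common matrix, with $X=[\mathbf{x}^1\dots\mathbf{x}^K]$, $Y=[\mathbf{y}^1\dots\mathbf{y}^K]\in\mathbb{R}^{nd\times K}$: $\bar X=\bar Y$, $(Y_\perp-\lambda_-X_\perp)^T(Y_\perp-\lambda_+X_\perp)\preceq0$, $X_\perp^TY_\perp=Y_\perp^TX_\perp$, where $\bar X$ replaces each agent's component by the agent average and $X_\perp=X-\bar X$. $w(\mathcal{S}_n)$ denotes the optimal value of this SDP. Agents $i,j$ are equivalent if for every feasible $(F,G)$, swapping the blocks of agents $i$ and $j$ gives a feasible solution with the same objective value. $f^A$, $G^A$, $G^C$ denote, respectively, the common agent block of function values, the common diagonal block, and the common off-diagonal block of a solution in which all $f_i$ are equal, all $G_{ii}$ are equal, and all $G_{ij}$ ($i\ne j$) are equal. A Gram-representable expression $h$ is scale-invariant if $h=\sum_jc_jh_j$ with coefficients $c_j$ independent of $n$ and each $h_j$ of one of the forms $\frac1n\sum_if_i(x_i)$, $\frac1n\sum_ix_i^Ty_i$, $\frac1{n^2}\sum_i\sum_jx_i^Ty_j$ for local variables $x_i,y_j$ of agents $i,j$ (common points being copied in each agent's variables); a constraint $h\le D$ is scale-invariant if $h$ is. An expression is single-agent if it is a linear combination, with coefficients independent of $n$, of terms involving only the local variables and local function of one agent $i$; a constraint $h\le D$ is single-agent if $h$ is. *)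

(* Defs.v *)
From HB Require Import structures.
From mathcomp Require Import all_boot all_order all_algebra.
From mathcomp Require Import boolp classical_sets reals constructive_ereal ereal.

Set Implicit Arguments.
Unset Strict Implicit.
Unset Printing Implicit Defensive.

Import Order.TTheory GRing.Theory Num.Theory.
Local Open Scope ring_scope.
Local Open Scope classical_set_scope.

Section PEP.
Variable R : realType.

Definition psd (m : nat) (A : 'M[R]_m) : Prop :=
  A^T = A /\ forall v : 'rV[R]_m, 0 <= (v *m A *m v^T) 0 0.

(* PEP variables for n agents with p vectors and q function values each:
   F i  = f_i in R^q (a row vector),
   G i j = G_ij = P_i^T P_j in R^{p x p} (block (i,j) of the Gram matrix). *)
Definition Fvar (n q : nat) := 'I_n -> 'rV[R]_q.
Definition Gvar (n p : nat) := 'I_n -> 'I_n -> 'M[R]_p.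

(* G = (G_ij) is a symmetric PSD (np x np) matrix, written out blockwise *)
Definition psd_blocks (n p : nat) (G : Gvar n p) : Prop :=
  (forall i j, G j i = (G i j)^T) /\
  forall v : 'I_n -> 'rV[R]_p,
    0 <= (\sum_i \sum_j (v i *m G i j *m (v j)^T)) 0 0.

Definition swap_idx (n : nat) (i j k : 'I_n) : 'I_n :=
  if k == i then j else if k == j then i else k.
Definition swapF n q (i j : 'I_n) (F : Fvar n q) : Fvar n q :=
  fun k => F (swap_idx i j k).
Definition swapG n p (i j : 'I_n) (G : Gvar n p) : Gvar n p :=
  fun k l => G (swap_idx i j k) (swap_idx i j l).

(* an LMI constraint affine in (F,G):
   C0 + sum_{i,a} F_i[a] CF_{i,a} + sum_{i,j,a,b} G_ij[a,b] CG_{i,j,a,b} >= 0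
   (linear scalar constraints are the case m = 1) *)
Record gen_lmi (n p q : nat) := GenLMI {
  gl_m : nat;
  gl_C0 : 'M[R]_gl_m;
  gl_CF : 'I_n -> 'I_q -> 'M[R]_gl_m;
  gl_CG : 'I_n -> 'I_n -> 'I_p -> 'I_p -> 'M[R]_gl_m }.
Arguments gl_C0 {n p q} L : rename.
Arguments gl_CF {n p q} L _ _ : rename.
Arguments gl_CG {n p q} L _ _ _ _ : rename.


Definition gen_lmi_eval n p q (L : gen_lmi n p q) (F : Fvar n q) (G : Gvar n p)
  : 'M[R]_(gl_m L) :=
  gl_C0 L + \sum_i \sum_a F i 0 a *: gl_CF L i a
          + \sum_i \sum_j \sum_a \sum_b G i j a b *: gl_CG L i j a b.

Record gen_obj (n p q : nat) := GenObj {
  go_c0 : R;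
  go_cF : 'I_n -> 'I_q -> R;
  go_cG : 'I_n -> 'I_n -> 'I_p -> 'I_p -> R }.

Definition gen_obj_eval n p q (o : gen_obj n p q) (F : Fvar n q) (G : Gvar n p) : R :=
  go_c0 o + \sum_i \sum_a go_cF o i a * F i 0 a
          + \sum_i \sum_j \sum_a \sum_b go_cG o i j a b * G i j a b.

(* A PEP: maximize the objective subject to G PSD and finitely many
   LMI-Gram-representable constraints (algorithm, interpolation, initial
   conditions, optimality condition, consensus constraints). *)
Record gen_pep (n p q : nat) := GenPEP {
  gp_obj : gen_obj n p q;
  gp_nL : nat;
  gp_L : 'I_gp_nL -> gen_lmi n p q }.
Arguments gp_L {n p q} P _ : rename.


Definition gen_feas n p q (P : gen_pep n p q) (F : Fvar n q) (G : Gvar n p) : Prop :=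
  psd_blocks G /\ forall k, psd (gen_lmi_eval (gp_L P k) F G).

Definition w_gen n p q (P : gen_pep n p q) : \bar R :=
  ereal_sup [set (gen_obj_eval (gp_obj P) FG.1 FG.2)%:E
            | FG in [set FG : Fvar n q * Gvar n p | gen_feas P FG.1 FG.2]].

Definition agents_equiv_gen n p q (P : gen_pep n p q) : Prop :=
  forall (F : Fvar n q) (G : Gvar n p) (i j : 'I_n),
    gen_feas P F G ->
    gen_feas P (swapF i j F) (swapG i j G) /\
    gen_obj_eval (gp_obj P) (swapF i j F) (swapG i j G)
      = gen_obj_eval (gp_obj P) F G.

(* The reduced SDP in the variables fA in R^q, GA, GC in R^{p x p}
   (obtained by restricting to f_i = fA, G_ii = GA, G_ij = GC (i <> j)). *)
Definition red_lmi_eval n p q (L : gen_lmi n p q)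
  (fA : 'rV[R]_q) (GA GC : 'M[R]_p) : 'M[R]_(gl_m L) :=
  gl_C0 L + \sum_a fA 0 a *: (\sum_i gl_CF L i a)
  + \sum_a \sum_b (GA a b *: (\sum_i gl_CG L i i a b)
                   + GC a b *: (\sum_i \sum_(j | j != i) gl_CG L i j a b)).

Definition red_obj_eval n p q (o : gen_obj n p q)
  (fA : 'rV[R]_q) (GA GC : 'M[R]_p) : R :=
  go_c0 o + \sum_a (\sum_i go_cF o i a) * fA 0 a
  + \sum_a \sum_b ((\sum_i go_cG o i i a b) * GA a b
                   + (\sum_i \sum_(j | j != i) go_cG o i j a b) * GC a b).

Definition red_feas n p q (P : gen_pep n p q)
  (fA : 'rV[R]_q) (GA GC : 'M[R]_p) : Prop :=
  GA^T = GA /\ GC^T = GC /\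
  psd (GA - GC) /\ psd (GA + (n.-1)%:R *: GC) /\
  forall k, psd (red_lmi_eval (gp_L P k) fA GA GC).

Definition w_gen_red n p q (P : gen_pep n p q) : \bar R :=
  ereal_sup [set (red_obj_eval (gp_obj P) X.1.1 X.1.2 X.2)%:E
            | X in [set X : 'rV[R]_q * 'M[R]_p * 'M[R]_p
                   | red_feas P X.1.1 X.1.2 X.2]].

Definition avgF n q (F : Fvar n q) (a : 'I_q) : R :=
  (n%:R)^-1 * \sum_i F i 0 a.
Definition gramA n p (G : Gvar n p) (a b : 'I_p) : R :=
  (n%:R)^-1 * \sum_i G i i a b.
Definition gramM n p (G : Gvar n p) (a b : 'I_p) : R :=
  (n%:R ^+ 2)^-1 * \sum_i \sum_j G i j a b.

(* scale-invariant expression: linear combination, with n-independent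
   coefficients, of the three forms above *)
Record si_expr (p q : nat) := SIExpr {
  si_cf : 'rV[R]_q;
  si_cA : 'M[R]_p;
  si_cM : 'M[R]_p }.

Definition si_eval n p q (h : si_expr p q) (F : Fvar n q) (G : Gvar n p) : R :=
  \sum_a si_cf h 0 a * avgF F a
  + \sum_a \sum_b (si_cA h a b * gramA G a b + si_cM h a b * gramM G a b).

(* single-agent LMI constraint (n-independent coefficients), applied to every
   agent i:  C0 + sum_a f_i[a] CF_a + sum_{a,b} G_ii[a,b] CG_{a,b} >= 0 *)
Record sa_lmi (p q : nat) := SALMI {
  sa_m : nat;
  sa_C0 : 'M[R]_sa_m;
  sa_CF : 'I_q -> 'M[R]_sa_m;
  sa_CG : 'I_p -> 'I_p -> 'M[R]_sa_m }.
Arguments sa_C0 {p q} c : rename.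
Arguments sa_CF {p q} c _ : rename.
Arguments sa_CG {p q} c _ _ : rename.


Definition sa_eval p q (c : sa_lmi p q) (f : 'rV[R]_q) (Gi : 'M[R]_p) : 'M[R]_(sa_m c) :=
  sa_C0 c + \sum_a f 0 a *: sa_CF c a + \sum_a \sum_b Gi a b *: sa_CG c a b.

(* a set of K consensus steps y^k = (W (x) I) x^k with a common W in W_{lm,lp};
   x^k (resp. y^k) is column cx k (resp. cy k) of every agent *)
Record cons_block (p : nat) := ConsBlock {
  cb_K : nat;
  cb_x : 'I_cb_K -> 'I_p;
  cb_y : 'I_cb_K -> 'I_p }.
Arguments cb_x {p} c _ : rename.
Arguments cb_y {p} c _ : rename.


(* (X_perp^T Y_perp)[k,l] for columns u (for k) and v (for l) *)
Definition perp_gram n p (G : Gvar n p) (u v : 'I_p) : R :=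
  \sum_i G i i u v - (n%:R)^-1 * \sum_i \sum_j G i j u v.

Definition cons_ok n p (lm lp : R) (c : cons_block p) (G : Gvar n p) : Prop :=
  let XY := \matrix_(k, l) perp_gram G (cb_x c k) (cb_y c l) in
  let YX := \matrix_(k, l) perp_gram G (cb_y c k) (cb_x c l) in
  let XX := \matrix_(k, l) perp_gram G (cb_x c k) (cb_x c l) in
  let YY := \matrix_(k, l) perp_gram G (cb_y c k) (cb_y c l) in
  (* Xbar = Ybar : || sum_i (x_i^k - y_i^k) ||^2 = 0 for every k *)
  (forall k, \sum_i \sum_j (G i j (cb_x c k) (cb_x c k) - G i j (cb_x c k) (cb_y c k)
                            - G i j (cb_y c k) (cb_x c k) + G i j (cb_y c k) (cb_y c k)) = 0)
  (* (Y_perp - lm X_perp)^T (Y_perp - lp X_perp) <= 0 *)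
  /\ psd (- (YY - lp *: YX - lm *: XY + (lm * lp) *: XX))
  /\ XY = YX.

Record pep_desc (p q : nat) := PEPDesc {
  pd_obj : si_expr p q;
  pd_nsa : nat;
  pd_sa : 'I_pd_nsa -> sa_lmi p q;          (* algorithm local steps, interpolation,
                                               single-agent initial conditions *)
  pd_nsi : nat;                             (* scale-invariant constraints h <= D *)
  pd_si : 'I_pd_nsi -> si_expr p q * R;
  pd_ncom : nat;                            (* columns holding common points (e.g. the minimizer) *)
  pd_com : 'I_pd_ncom -> 'I_p;
  pd_nopt : nat;                            (* columns g with (1/n) sum_i g_i = 0 *)
  pd_opt : 'I_pd_nopt -> 'I_p;
  pd_ncons : nat;
  pd_cons : 'I_pd_ncons -> cons_block p }.
Arguments pd_sa {p q} D _ : rename.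
Arguments pd_si {p q} D _ : rename.
Arguments pd_com {p q} D _ : rename.
Arguments pd_opt {p q} D _ : rename.
Arguments pd_cons {p q} D _ : rename.


Definition pd_feas (lm lp : R) n p q (D : pep_desc p q) (F : Fvar n q) (G : Gvar n p) : Prop :=
  psd_blocks G
  /\ (forall k i, psd (sa_eval (pd_sa D k) (F i) (G i i)))
  /\ (forall k, si_eval (pd_si D k).1 F G <= (pd_si D k).2)
  /\ (forall k i j, let a := pd_com D k in
        G i i a a - G i j a a - G j i a a + G j j a a = 0)
  /\ (forall k, let a := pd_opt D k in \sum_i \sum_j G i j a a = 0)
  /\ (forall k, cons_ok lm lp (pd_cons D k) G).

Definition w_pd (lm lp : R) n p q (D : pep_desc p q) : \bar R :=
  ereal_sup [set (si_eval (pd_obj D) FG.1 FG.2)%:E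
            | FG in [set FG : Fvar n q * Gvar n p | pd_feas lm lp D FG.1 FG.2]].

Definition agents_equiv_pd (lm lp : R) n p q (D : pep_desc p q) : Prop :=
  forall (F : Fvar n q) (G : Gvar n p) (i j : 'I_n),
    pd_feas lm lp D F G ->
    pd_feas lm lp D (swapF i j F) (swapG i j G) /\
    si_eval (pd_obj D) (swapF i j F) (swapG i j G) = si_eval (pd_obj D) F G.

(* The n-independent reduced SDP, in the variables fA, GA and
   GM = (1/n) GA + ((n-1)/n) GC (the average block of G). *)
Definition si_red p q (h : si_expr p q) (fA : 'rV[R]_q) (GA GM : 'M[R]_p) : R :=
  \sum_a si_cf h 0 a * fA 0 a
  + \sum_a \sum_b (si_cA h a b * GA a b + si_cM h a b * GM a b).

Definition cons_red_ok p (lm lp : R) (c : cons_block p) (GA GM : 'M[R]_p) : Prop :=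
  let Dl := GA - GM in
  let XY := \matrix_(k, l) Dl (cb_x c k) (cb_y c l) in
  let YX := \matrix_(k, l) Dl (cb_y c k) (cb_x c l) in
  let XX := \matrix_(k, l) Dl (cb_x c k) (cb_x c l) in
  let YY := \matrix_(k, l) Dl (cb_y c k) (cb_y c l) in
  (forall k, GM (cb_x c k) (cb_x c k) - GM (cb_x c k) (cb_y c k)
             - GM (cb_y c k) (cb_x c k) + GM (cb_y c k) (cb_y c k) = 0)
  /\ psd (- (YY - lp *: YX - lm *: XY + (lm * lp) *: XX))
  /\ XY = YX.

Definition pd_red_feas (lm lp : R) p q (D : pep_desc p q)
  (fA : 'rV[R]_q) (GA GM : 'M[R]_p) : Prop :=
  GA^T = GA /\ GM^T = GM /\ psd GM /\ psd (GA - GM)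
  /\ (forall k, psd (sa_eval (pd_sa D k) fA GA))
  /\ (forall k, si_red (pd_si D k).1 fA GA GM <= (pd_si D k).2)
  /\ (forall k, let a := pd_com D k in GA a a - GM a a = 0)
  /\ (forall k, let a := pd_opt D k in GM a a = 0)
  /\ (forall k, cons_red_ok lm lp (pd_cons D k) GA GM).

Definition w_pd_red (lm lp : R) p q (D : pep_desc p q) : \bar R :=
  ereal_sup [set (si_red (pd_obj D) X.1.1 X.1.2 X.2)%:E
            | X in [set X : 'rV[R]_q * 'M[R]_p * 'M[R]_p
                   | pd_red_feas lm lp D X.1.1 X.1.2 X.2]].

End PEP.

(* Main.v *)
Require Import Defs.
From HB Require Import structures.
From mathcomp Require Import all_boot all_order all_algebra.
From mathcomp Require Import boolp classical_sets reals constructive_ereal ereal.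
From mathcomp Require Import all_fingroup ring lra.
Import Order.TTheory GRing.Theory Num.Theory.
Local Open Scope ring_scope.

Set Implicit Arguments.
Unset Strict Implicit.
Unset Printing Implicit Defensive.


Section Avg.
Variables (R : realType) (n : nat).
Local Notation N := #|{perm 'I_n}|.

Definition avg (V : lmodType R) (h : {perm 'I_n} -> V) : V := (N%:R)^-1 *: \sum_s h s.
Definition avgR (h : {perm 'I_n} -> R) : R := (N%:R)^-1 * \sum_s h s.

Lemma N_neq0 : (N%:R : R) != 0.
Proof.
rewrite pnatr_eq0 -lt0n; apply/card_gt0P; by exists 1%g.
Qed.

Lemma avg_cst (V : lmodType R) (x : V) : avg (fun _ => x) = x.
Proof. by rewrite /avg sumr_const -scaler_nat scalerA mulVf ?N_neq0 // scale1r. Qed.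

Lemma avgR_cst (x : R) : avgR (fun _ => x) = x.
Proof. by rewrite /avgR sumr_const -[x *+ _]mulr_natl mulrA mulVf ?N_neq0 // mul1r. Qed.

Lemma avgD (V : lmodType R) (f g : {perm 'I_n} -> V) :
  avg (fun s => f s + g s) = avg f + avg g.
Proof. by rewrite /avg big_split scalerDr. Qed.

Lemma avgRD (f g : {perm 'I_n} -> R) :
  avgR (fun s => f s + g s) = avgR f + avgR g.
Proof. by rewrite /avgR big_split mulrDr. Qed.

Lemma avgN (V : lmodType R) (f : {perm 'I_n} -> V) :
  avg (fun s => - f s) = - avg f.
Proof. by rewrite /avg sumrN scalerN. Qed.

Lemma avgRN (f : {perm 'I_n} -> R) :
  avgR (fun s => - f s) = - avgR f.
Proof. by rewrite /avgR sumrN mulrN. Qed.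

Lemma avgB (V : lmodType R) (f g : {perm 'I_n} -> V) :
  avg (fun s => f s - g s) = avg f - avg g.
Proof. by rewrite avgD avgN. Qed.

Lemma avgRB (f g : {perm 'I_n} -> R) :
  avgR (fun s => f s - g s) = avgR f - avgR g.
Proof. by rewrite avgRD avgRN. Qed.

Lemma avgZ (V : lmodType R) (a : R) (f : {perm 'I_n} -> V) :
  avg (fun s => a *: f s) = a *: avg f.
Proof. by rewrite /avg -scaler_sumr !scalerA mulrC. Qed.

Lemma avgRM (a : R) (f : {perm 'I_n} -> R) :
  avgR (fun s => a * f s) = a * avgR f.
Proof. by rewrite /avgR -mulr_sumr mulrCA. Qed.

Lemma avgRMr (a : R) (f : {perm 'I_n} -> R) :
  avgR (fun s => f s * a) = avgR f * a.
Proof. by rewrite /avgR -mulr_suml mulrA. Qed.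

Lemma avg_sum (V : lmodType R) (I : Type) (r : seq I) (P : pred I)
  (f : I -> {perm 'I_n} -> V) :
  avg (fun s => \sum_(i <- r | P i) f i s) = \sum_(i <- r | P i) avg (f i).
Proof. by rewrite /avg exchange_big scaler_sumr. Qed.

Lemma avgR_sum (I : Type) (r : seq I) (P : pred I)
  (f : I -> {perm 'I_n} -> R) :
  avgR (fun s => \sum_(i <- r | P i) f i s) = \sum_(i <- r | P i) avgR (f i).
Proof. by rewrite /avgR exchange_big mulr_sumr. Qed.

Lemma avgRZ (V : lmodType R) (h : {perm 'I_n} -> R) (x : V) :
  avgR h *: x = avg (fun s => h s *: x).
Proof. by rewrite /avg /avgR -scaler_suml scalerA. Qed.

Lemma avgR_ge0 (h : {perm 'I_n} -> R) : (forall s, 0 <= h s) -> 0 <= avgR h.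
Proof.
move=> H; rewrite /avgR mulr_ge0 ?invr_ge0 ?ler0n //; exact: sumr_ge0.
Qed.

Lemma avgR_le (h g : {perm 'I_n} -> R) : (forall s, h s <= g s) -> avgR h <= avgR g.
Proof.
move=> H; rewrite -subr_ge0 -avgRB; apply: avgR_ge0 => s; rewrite subr_ge0; exact: H.
Qed.

Lemma avg_mxE m1 m2 (h : {perm 'I_n} -> 'M[R]_(m1, m2)) i j :
  avg h i j = avgR (fun s => h s i j).
Proof. by rewrite /avg /avgR mxE summxE. Qed.

Lemma avg_ext (V : lmodType R) (f g : {perm 'I_n} -> V) :
  (forall s, f s = g s) -> avg f = avg g.
Proof. by move=> H; rewrite /avg; congr (_ *: _); apply: eq_bigr => s _. Qed.

Lemma avgR_ext (f g : {perm 'I_n} -> R) :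
  (forall s, f s = g s) -> avgR f = avgR g.
Proof. by move=> H; rewrite /avgR; congr (_ * _); apply: eq_bigr => s _. Qed.

End Avg.


Section Quad.
Variable R : realType.

Definition Q m (M : 'M[R]_m) (u w : 'rV[R]_m) : R := (u *m M *m w^T) 0 0.

Lemma QDM m (A B : 'M[R]_m) u w : Q (A + B) u w = Q A u w + Q B u w.
Proof. by rewrite /Q mulmxDr mulmxDl mxE. Qed.
Lemma QZM m (c : R) (A : 'M[R]_m) u w : Q (c *: A) u w = c * Q A u w.
Proof. by rewrite /Q -scalemxAr -scalemxAl mxE. Qed.
Lemma QNM m (A : 'M[R]_m) u w : Q (- A) u w = - Q A u w.
Proof. by rewrite -scaleN1r QZM mulN1r. Qed.
Lemma QBM m (A B : 'M[R]_m) u w : Q (A - B) u w = Q A u w - Q B u w.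
Proof. by rewrite QDM QNM. Qed.
Lemma QsumM m (I : Type) (r : seq I) (P : pred I) (A : I -> 'M[R]_m) u w :
  Q (\sum_(i <- r | P i) A i) u w = \sum_(i <- r | P i) Q (A i) u w.
Proof. by rewrite /Q mulmx_sumr mulmx_suml summxE. Qed.
Lemma QDu m (A : 'M[R]_m) u1 u2 w : Q A (u1 + u2) w = Q A u1 w + Q A u2 w.
Proof. by rewrite /Q !mulmxDl mxE. Qed.
Lemma QZu m (A : 'M[R]_m) c u w : Q A (c *: u) w = c * Q A u w.
Proof. by rewrite /Q -!scalemxAl mxE. Qed.
Lemma Qsumu m (I : Type) (r : seq I) (P : pred I) (A : 'M[R]_m) (u : I -> 'rV_m) w :
  Q A (\sum_(i <- r | P i) u i) w = \sum_(i <- r | P i) Q A (u i) w.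
Proof. by rewrite /Q !mulmx_suml summxE. Qed.
Lemma QDw m (A : 'M[R]_m) u w1 w2 : Q A u (w1 + w2) = Q A u w1 + Q A u w2.
Proof. by rewrite /Q linearD /= mulmxDr mxE. Qed.
Lemma QZw m (A : 'M[R]_m) c u w : Q A u (c *: w) = c * Q A u w.
Proof. by rewrite /Q linearZ /= -scalemxAr mxE. Qed.
Lemma Qsumw m (I : Type) (r : seq I) (P : pred I) (A : 'M[R]_m) u (w : I -> 'rV_m) :
  Q A u (\sum_(i <- r | P i) w i) = \sum_(i <- r | P i) Q A u (w i).
Proof. by rewrite /Q raddf_sum mulmx_sumr summxE. Qed.
Lemma QNu m (A : 'M[R]_m) u w : Q A (- u) w = - Q A u w.
Proof. by rewrite -scaleN1r QZu mulN1r. Qed.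
Lemma QNw m (A : 'M[R]_m) u w : Q A u (- w) = - Q A u w.
Proof. by rewrite -scaleN1r QZw mulN1r. Qed.
Lemma Q0u m (A : 'M[R]_m) w : Q A 0 w = 0.
Proof. by rewrite /Q !mul0mx mxE. Qed.
Lemma Q0w m (A : 'M[R]_m) u : Q A u 0 = 0.
Proof. by rewrite /Q trmx0 mulmx0 mxE. Qed.

Lemma psdE m (A : 'M[R]_m) : psd A <-> A^T = A /\ forall v, 0 <= Q A v v.
Proof. by []. Qed.

Lemma psd_scale m (c : R) (A : 'M[R]_m) : 0 < c -> psd (c *: A) -> psd A.
Proof.
move=> c0 [H1 H2]; split.
  apply: (@scalerI _ _ c); first by rewrite gt_eqF.
  by rewrite -linearZ /= H1.
move=> v; have := H2 v; rewrite -/(Q _ _ _) QZM pmulr_rge0 //.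
Qed.

Lemma psd_scaleW m (c : R) (A : 'M[R]_m) : 0 <= c -> psd A -> psd (c *: A).
Proof.
move=> c0 [H1 H2]; split; first by rewrite linearZ /= H1.
move=> v; rewrite -/(Q _ _ _) QZM mulr_ge0 //; exact: H2.
Qed.

Lemma avg_tr n m1 m2 (h : {perm 'I_n} -> 'M[R]_(m1, m2)) :
  (avg h)^T = avg (fun s => (h s)^T).
Proof.
by apply/matrixP => i j; rewrite mxE !avg_mxE; apply: avgR_ext => s; rewrite mxE.
Qed.

Lemma Q_avg n m (h : {perm 'I_n} -> 'M[R]_m) u w :
  Q (avg h) u w = avgR (fun s => Q (h s) u w).
Proof. by rewrite /avg QZM QsumM. Qed.

Lemma psd_avg n m (h : {perm 'I_n} -> 'M[R]_m) :
  (forall s, psd (h s)) -> psd (avg h).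
Proof.
move=> H; split.
  by rewrite avg_tr; apply: avg_ext => s; case: (H s).
move=> v; rewrite -/(Q _ _ _) Q_avg; apply: avgR_ge0 => s; case: (H s) => _; exact.
Qed.

End Quad.


Section Sym.
Variables (R : realType) (n p q : nat).

Definition actF (s : {perm 'I_n}) (F : Fvar R n q) : Fvar R n q := fun i => F (s i).
Definition actG (s : {perm 'I_n}) (G : Gvar R n p) : Gvar R n p :=
  fun i j => G (s i) (s j).
Definition symF (F : Fvar R n q) : Fvar R n q := fun i => avg (fun s => F (s i)).
Definition symG (G : Gvar R n p) : Gvar R n p :=
  fun i j => avg (fun s => G (s i) (s j)).

Lemma swap_idxE (i j k : 'I_n) : swap_idx i j k = tperm i j k.
Proof.
rewrite /swap_idx; case: tpermP => [->|->|/eqP/negbTE -> /eqP/negbTE ->].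
- by rewrite eqxx.
- by case: eqP => [->|_]; rewrite ?eqxx.
- by [].
Qed.

Lemma actF_swap i j F : swapF i j F = actF (tperm i j) F.
Proof. by apply: funext => k; rewrite /swapF /actF swap_idxE. Qed.
Lemma actG_swap i j G : swapG i j G = actG (tperm i j) G.
Proof. by apply: funext => k; apply: funext => l; rewrite /swapG /actG !swap_idxE. Qed.

Lemma actF_mul s t F : actF (s * t)%g F = actF s (actF t F).
Proof. by apply: funext => k; rewrite /actF permM. Qed.
Lemma actG_mul s t G : actG (s * t)%g G = actG s (actG t G).
Proof. by apply: funext => k; apply: funext => l; rewrite /actG !permM. Qed.
Lemma actF1 F : actF 1%g F = F.
Proof. by apply: funext => k; rewrite /actF perm1. Qed.
Lemma actG1 G : actG 1%g G = G.
Proof. by apply: funext => k; apply: funext => l; rewrite /actG !perm1. Qed.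

Lemma perm_closure (feas : Fvar R n q -> Gvar R n p -> Prop)
  (obj : Fvar R n q -> Gvar R n p -> R) :
  (forall F G i j, feas F G ->
     feas (swapF i j F) (swapG i j G) /\ obj (swapF i j F) (swapG i j G) = obj F G) ->
  forall s F G, feas F G -> feas (actF s F) (actG s G) /\ obj (actF s F) (actG s G) = obj F G.
Proof.
move=> H s F G HF; case: (prod_tpermP s) => ts -> _.
elim: ts => [|t ts [IH1 IH2]]; first by rewrite big_nil actF1 actG1.
rewrite big_cons actF_mul actG_mul -actF_swap -actG_swap.
have [H1 H2] := H _ _ t.1 t.2 IH1; split => //; by rewrite H2.
Qed.

Lemma symF_const F i i' : symF F i = symF F i'.
Proof.
rewrite /symF /avg; congr (_ *: _).
rewrite [RHS](reindex_inj (mulgI (tperm i' i))) /=.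
by apply: eq_bigr => s _; rewrite permM tpermL.
Qed.

Lemma symG_move G i j i' j' (t : {perm 'I_n}) :
  t i' = i -> t j' = j -> symG G i' j' = symG G i j.
Proof.
move=> Hi Hj; rewrite /symG /avg; congr (_ *: _).
rewrite [LHS](reindex_inj (mulgI t)) /=.
by apply: eq_bigr => s _; rewrite !permM Hi Hj.
Qed.

Lemma symG_diag G i i' : symG G i i = symG G i' i'.
Proof. by apply: (@symG_move _ _ _ _ _ (tperm i i')); rewrite tpermL. Qed.

Lemma symG_off G i j i' j' : i != j -> i' != j' -> symG G i j = symG G i' j'.
Proof.
move=> Hij Hij'.
pose k := tperm i i' j.
apply: (@symG_move _ _ _ _ _ (tperm i i' * tperm k j')%g); rewrite permM.
- rewrite tpermL tpermD //; last by rewrite eq_sym.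
  rewrite /k; apply/eqP => E.
  have : tperm i i' i = tperm i i' j by rewrite tpermL.
  by move/perm_inj => /eqP; rewrite (negbTE Hij).
- by rewrite -/k tpermL.
Qed.

Lemma psd_blocks_avg (Gs : {perm 'I_n} -> Gvar R n p) :
  (forall s, psd_blocks (Gs s)) -> psd_blocks (fun i j => avg (fun s => Gs s i j)).
Proof.
move=> H; split.
  by move=> i j; rewrite avg_tr; apply: avg_ext => s; case: (H s) => ->.
move=> v; rewrite summxE.
under eq_bigr => i _ do rewrite summxE.
under eq_bigr => i _ do under eq_bigr => j _ do rewrite -/(Q _ _ _) Q_avg.
under eq_bigr => i _ do rewrite -avgR_sum.
rewrite -avgR_sum; apply: avgR_ge0 => s.
case: (H s) => _ /(_ v); rewrite summxE.
by under eq_bigr => i _ do rewrite summxE.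
Qed.

End Sym.


Section Blk.
Variables (R : realType) (n p : nat).
Hypothesis n2 : (2 <= n)%N.

Definition blkG (GA GC : 'M[R]_p) : Gvar R n p := fun i j => if i == j then GA else GC.

Lemma n1E : ((n.-1)%:R : R) = n%:R - 1.
Proof. by rewrite -[in n%:R](@prednK n) 1?ltnW // -natr1 addrK. Qed.

Lemma blk_quad GA GC (v : 'I_n -> 'rV[R]_p) :
  (\sum_i \sum_j (v i *m blkG GA GC i j *m (v j)^T)) 0 0
  = \sum_i Q (GA - GC) (v i) (v i) + Q GC (\sum_i v i) (\sum_i v i).
Proof.
rewrite summxE; under eq_bigr => i _ do rewrite summxE.
rewrite Qsumu; under [X in _ = _ + X]eq_bigr => i _ do rewrite Qsumw.
rewrite -big_split /=; apply: eq_bigr => i _.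
rewrite (bigD1 i) //= [in RHS](bigD1 i) //= addrA; congr (_ + _).
  by rewrite -/(Q _ _ _) /blkG eqxx QBM subrK.
apply: eq_bigr => j /negbTE Hj; by rewrite -/(Q _ _ _) /blkG eq_sym Hj.
Qed.

Lemma psd_blocks_blk GA GC :
  psd_blocks (blkG GA GC) <->
  [/\ GA^T = GA, GC^T = GC, psd (GA - GC) & psd (GA + (n.-1)%:R *: GC)].
Proof.
have n0 : (0 < n)%N by apply: leq_trans n2.
pose i0 : 'I_n := Ordinal n0.
pose i1 : 'I_n := Ordinal n2.
have i01 : i0 != i1 by [].
have nR0 : (0 : R) < n%:R by rewrite ltr0n.
split.
- move=> [Hs Hq].
  have SA : GA^T = GA by have := Hs i0 i0; rewrite /blkG eqxx.
  have SC : GC^T = GC by have := Hs i0 i1; rewrite /blkG (negbTE i01) eq_sym (negbTE i01).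
  split => //.
  + split; first by rewrite linearB /= SA SC.
    move=> u; rewrite -/(Q _ _ _).
    have := Hq (fun i => if i == i0 then u else if i == i1 then - u else 0).
    rewrite blk_quad.
    have E : \sum_i (if i == i0 then u else if i == i1 then - u else 0) = 0.
      rewrite (bigD1 i0) //= (bigD1 i1) //= ?eqxx big1 ?addr0 ?subrr //.
      by move=> i /andP [/negbTE -> /negbTE ->].
    rewrite E Q0u addr0 (bigD1 i0) //= (bigD1 i1) //= ?eqxx.
    rewrite big1; last by move=> i /andP [/negbTE -> /negbTE ->]; rewrite Q0u.
    rewrite addr0 QNu QNw opprK => H; lra.
  + split; first by rewrite linearD linearZ /= SA SC.
    move=> u; rewrite -/(Q _ _ _).
    have := Hq (fun _ => u); rewrite blk_quad !sumr_const card_ord -scaler_nat QZu QZw.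
    have E : Q (GA - GC) u u *+ n + n%:R * (n%:R * Q GC u u) =
             n%:R * (Q GA u u + (n%:R - 1) * Q GC u u) by rewrite QBM -mulr_natl; ring.
    by rewrite E pmulr_rge0 // QDM QZM n1E.
- move=> [SA SC [_ HD] [_ HS]]; split.
    move=> i j; rewrite /blkG eq_sym; by case: (i == j).
  move=> v; rewrite blk_quad.
  have [m Sm] : exists m : 'rV[R]_p, \sum_i v i = n%:R *: m.
    by exists ((n%:R)^-1 *: \sum_i v i); rewrite scalerA mulfV ?scale1r // gt_eqF.
  have Sw : \sum_i (v i - m) = 0.
    by rewrite sumrB sumr_const card_ord -scaler_nat Sm subrr.
  have -> : \sum_i Q (GA - GC) (v i) (v i) =
      \sum_i Q (GA - GC) (v i - m) (v i - m) + n%:R * Q (GA - GC) m m.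
    have E : forall i, Q (GA - GC) (v i) (v i) = Q (GA - GC) (v i - m) (v i - m)
         + (Q (GA - GC) (v i - m) m + Q (GA - GC) m (v i - m)) + Q (GA - GC) m m.
      move=> i; set w := v i - m; have Hv : v i = w + m by rewrite /w subrK.
      rewrite Hv QDu !QDw; ring.
    under eq_bigr => i _ do rewrite E.
    rewrite !big_split /= -Qsumu -Qsumw Sw Q0u Q0w addr0 sumr_const card_ord mulr_natl //.
    by rewrite addr0.
  rewrite Sm QZu QZw.
  have H1 : 0 <= \sum_i Q (GA - GC) (v i - m) (v i - m) by apply: sumr_ge0 => i _; exact: HD.
  have H2 := HS m; rewrite -/(Q _ _ _) QDM QZM n1E in H2.
  have H3 : 0 <= n%:R * (Q GA m m + (n%:R - 1) * Q GC m m) by rewrite mulr_ge0 // ltW.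
  apply: le_trans (addr_ge0 H1 H3) _; rewrite QBM; rewrite le_eqVlt; apply/orP; left; apply/eqP; ring.
Qed.

End Blk.


Section Sums.
Variables (R : realType) (n p : nat).

Lemma sum4_blk (V : lmodType R) (GA GC : 'M[R]_p) (C : 'I_n -> 'I_n -> 'I_p -> 'I_p -> V) :
  \sum_i \sum_j \sum_a \sum_b @blkG R n p GA GC i j a b *: C i j a b =
  \sum_a \sum_b (GA a b *: \sum_i C i i a b + GC a b *: \sum_i \sum_(j | j != i) C i j a b).
Proof.
under eq_bigr => i _ do rewrite (bigD1 i) //=.
rewrite big_split /=.
under eq_bigr => i _ do rewrite /blkG eqxx.
under [X in _ + X = _]eq_bigr => i _ do
  under eq_bigr => j /negbTE Hj do rewrite /blkG eq_sym Hj.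
rewrite [X in X + _ = _]exchange_big /=.
under [X in X + _ = _]eq_bigr => a _ do rewrite exchange_big /=.
under [X in _ + X = _]eq_bigr => i _ do rewrite exchange_big /=.
under [X in _ + X = _]eq_bigr => i _ do under eq_bigr => a _ do rewrite exchange_big /=.
rewrite [X in _ + X = _]exchange_big /=.
under [X in _ + X = _]eq_bigr => a _ do rewrite exchange_big /=.
rewrite -big_split /=; apply: eq_bigr => a _.
rewrite -big_split /=; apply: eq_bigr => b _.
by rewrite !scaler_sumr; congr (_ + _); apply: eq_bigr => i _; rewrite scaler_sumr.
Qed.

Lemma sum4_blkR (GA GC : 'M[R]_p) (C : 'I_n -> 'I_n -> 'I_p -> 'I_p -> R) :
  \sum_i \sum_j \sum_a \sum_b C i j a b * @blkG R n p GA GC i j a b =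
  \sum_a \sum_b ((\sum_i C i i a b) * GA a b + (\sum_i \sum_(j | j != i) C i j a b) * GC a b).
Proof.
under eq_bigr => i _ do rewrite (bigD1 i) //=.
rewrite big_split /=.
under eq_bigr => i _ do rewrite /blkG eqxx.
under [X in _ + X = _]eq_bigr => i _ do
  under eq_bigr => j /negbTE Hj do rewrite /blkG eq_sym Hj.
rewrite [X in X + _ = _]exchange_big /=.
under [X in X + _ = _]eq_bigr => a _ do rewrite exchange_big /=.
under [X in _ + X = _]eq_bigr => i _ do rewrite exchange_big /=.
under [X in _ + X = _]eq_bigr => i _ do under eq_bigr => a _ do rewrite exchange_big /=.
rewrite [X in _ + X = _]exchange_big /=.
under [X in _ + X = _]eq_bigr => a _ do rewrite exchange_big /=.
rewrite -big_split /=; apply: eq_bigr => a _.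
rewrite -big_split /=; apply: eq_bigr => b _.
by rewrite !mulr_suml; congr (_ + _); apply: eq_bigr => i _; rewrite mulr_suml.
Qed.

End Sums.

Section Part1.
Variables (R : realType) (n p q : nat).

Lemma gen_lmi_sym (L : gen_lmi R n p q) F G :
  gen_lmi_eval L (symF F) (symG G) =
  avg (fun s => gen_lmi_eval L (actF s F) (actG s G)).
Proof.
rewrite /gen_lmi_eval avgD avgD avg_cst !avg_sum.
congr (_ + _ + _); apply: eq_bigr => i _; rewrite avg_sum; apply: eq_bigr => a _.
  by rewrite /symF avg_mxE avgRZ.
rewrite avg_sum; apply: eq_bigr => j _; rewrite avg_sum; apply: eq_bigr => b _.
by rewrite /symG avg_mxE avgRZ.
Qed.

Lemma gen_obj_sym (o : gen_obj R n p q) F G :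
  gen_obj_eval o (symF F) (symG G) =
  avgR (fun s => gen_obj_eval o (actF s F) (actG s G)).
Proof.
rewrite /gen_obj_eval avgRD avgRD avgR_cst !avgR_sum.
congr (_ + _ + _); apply: eq_bigr => i _; rewrite avgR_sum; apply: eq_bigr => a _.
  by rewrite /symF avg_mxE avgRM.
rewrite avgR_sum; apply: eq_bigr => j _; rewrite avgR_sum; apply: eq_bigr => b _.
by rewrite /symG avg_mxE avgRM.
Qed.

Lemma sym_gen (P : gen_pep R n p q) F G :
  agents_equiv_gen P -> gen_feas P F G ->
  gen_feas P (symF F) (symG G) /\
  gen_obj_eval (gp_obj P) (symF F) (symG G) = gen_obj_eval (gp_obj P) F G.
Proof.
move=> Heq HF.
have cl := @perm_closure R n p q (gen_feas P) (gen_obj_eval (gp_obj P)) Heq.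
split; first split.
- apply: psd_blocks_avg => s; by case: (cl s F G HF) => -[].
- move=> k; rewrite gen_lmi_sym; apply: psd_avg => s; by case: (cl s F G HF) => -[].
- rewrite gen_obj_sym (@avgR_ext _ _ _ (fun _ => gen_obj_eval (gp_obj P) F G)) ?avgR_cst //.
  by move=> s; case: (cl s F G HF).
Qed.

Hypothesis n2 : (2 <= n)%N.

Lemma sym_is_blk (F : Fvar R n q) (G : Gvar R n p) :
  exists fA GA GC, symF F = (fun _ => fA) /\ symG G = @blkG R n p GA GC.
Proof.
have n0 : (0 < n)%N by apply: leq_trans n2.
pose i0 : 'I_n := Ordinal n0.
pose i1 : 'I_n := Ordinal n2.
have i01 : i0 != i1 by [].
exists (symF F i0), (symG G i0 i0), (symG G i0 i1); split.
  by apply: funext => i; apply: symF_const.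
apply: funext => i; apply: funext => j; rewrite /blkG.
case: eqP => [->|/eqP Hij]; first exact: symG_diag.
exact: symG_off.
Qed.

Lemma gen_lmi_blk (L : gen_lmi R n p q) fA GA GC :
  gen_lmi_eval L (fun _ => fA) (@blkG R n p GA GC) = red_lmi_eval L fA GA GC.
Proof.
rewrite /gen_lmi_eval /red_lmi_eval sum4_blk; congr (_ + _ + _).
rewrite exchange_big /=; apply: eq_bigr => a _; by rewrite scaler_sumr.
Qed.

Lemma gen_obj_blk (o : gen_obj R n p q) fA GA GC :
  gen_obj_eval o (fun _ => fA) (@blkG R n p GA GC) = red_obj_eval o fA GA GC.
Proof.
rewrite /gen_obj_eval /red_obj_eval sum4_blkR; congr (_ + _ + _).
rewrite exchange_big /=; apply: eq_bigr => a _; by rewrite mulr_suml.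
Qed.

Lemma gen_feas_blk (P : gen_pep R n p q) fA GA GC :
  gen_feas P (fun _ => fA) (@blkG R n p GA GC) <-> red_feas P fA GA GC.
Proof.
rewrite /gen_feas /red_feas psd_blocks_blk //.
split.
- move=> [[SA SC H1 H2] HL]; do 4!split => //.
  by move=> k; rewrite -gen_lmi_blk.
- move=> [SA [SC [H1 [H2 HL]]]]; split => // k; by rewrite gen_lmi_blk.
Qed.

Theorem part1 (P : gen_pep R n p q) : agents_equiv_gen P -> w_gen P = w_gen_red P.
Proof.
move=> Heq; rewrite /w_gen /w_gen_red; congr ereal_sup.
rewrite predeqE => x; split.
- move=> [[F G] /= HF <-].
  have [HS HO] := sym_gen Heq HF.
  have [fA [GA [GC [EF EG]]]] := sym_is_blk F G.
  exists (fA, GA, GC) => /=.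
    by apply/gen_feas_blk; rewrite -EF -EG.
  by rewrite -gen_obj_blk -EF -EG HO.
- move=> [[[fA GA] GC] /= HF <-].
  exists ((fun _ => fA), @blkG R n p GA GC) => /=.
    exact/gen_feas_blk.
  by rewrite gen_obj_blk.
Qed.

End Part1.


Section Part2sym.
Variables (R : realType) (lm lp : R) (n p q : nat).
Implicit Types (F : Fvar R n q) (G : Gvar R n p).

Lemma symF_E F i a : symF F i 0 a = avgR (fun s => actF s F i 0 a).
Proof. by rewrite /symF avg_mxE. Qed.
Lemma symG_E G i j a b : symG G i j a b = avgR (fun s => actG s G i j a b).
Proof. by rewrite /symG avg_mxE. Qed.

Lemma sa_sym (c : sa_lmi R p q) F G i :
  sa_eval c (symF F i) (symG G i i) =
  avg (fun s => sa_eval c (actF s F i) (actG s G i i)).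
Proof.
rewrite /sa_eval avgD avgD avg_cst !avg_sum.
congr (_ + _ + _); apply: eq_bigr => a _; first by rewrite symF_E avgRZ.
rewrite avg_sum; apply: eq_bigr => b _; by rewrite symG_E avgRZ.
Qed.

Lemma si_sym (h : si_expr R p q) F G :
  si_eval h (symF F) (symG G) = avgR (fun s => si_eval h (actF s F) (actG s G)).
Proof.
rewrite /si_eval avgRD !avgR_sum; congr (_ + _); apply: eq_bigr => a _.
- rewrite avgRM /avgF avgRM avgR_sum; congr (_ * (_ * _)); apply: eq_bigr => i _.
  exact: symF_E.
- rewrite avgR_sum; apply: eq_bigr => b _; rewrite avgRD !avgRM.
  rewrite /gramA /gramM !avgR_sum; congr (_ * (_ * _) + _ * (_ * _)).
    by apply: eq_bigr => i _; rewrite symG_E.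
  apply: eq_bigr => i _; rewrite avgR_sum; apply: eq_bigr => j _; by rewrite symG_E.
Qed.

Lemma perp_sym G u v :
  perp_gram (symG G) u v = avgR (fun s => perp_gram (actG s G) u v).
Proof.
rewrite /perp_gram avgRB avgRM !avgR_sum; congr (_ - _ * _).
  by apply: eq_bigr => i _; rewrite symG_E.
apply: eq_bigr => i _; rewrite avgR_sum; apply: eq_bigr => j _; by rewrite symG_E.
Qed.

Lemma perp_mx_sym G m (x y : 'I_m -> 'I_p) :
  \matrix_(k, l) perp_gram (symG G) (x k) (y l) =
  avg (fun s => \matrix_(k, l) perp_gram (actG s G) (x k) (y l)).
Proof.
apply/matrixP => k l; rewrite mxE avg_mxE perp_sym; apply: avgR_ext => s; by rewrite mxE.
Qed.

Lemma cons_sym (c : cons_block p) G :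
  (forall s, cons_ok lm lp c (actG s G)) -> cons_ok lm lp c (symG G).
Proof.
move=> H; rewrite /cons_ok !perp_mx_sym; split; last split.
- move=> k.
  rewrite (_ : \sum_i _ = avgR (fun s => \sum_i \sum_j
     (actG s G i j (cb_x k) (cb_x k) - actG s G i j (cb_x k) (cb_y k)
      - actG s G i j (cb_y k) (cb_x k) + actG s G i j (cb_y k) (cb_y k)))).
    rewrite (@avgR_ext _ _ _ (fun _ => 0)) ?avgR_cst // => s.
    by case: (H s) => /(_ k).
  rewrite avgR_sum; apply: eq_bigr => i _; rewrite avgR_sum; apply: eq_bigr => j _.
  by rewrite avgRD !avgRB !symG_E.
- rewrite -!avgZ -!avgB -avgD -avgN; apply: psd_avg => s.
  by case: (H s) => _ [].
- by apply: avg_ext => s; case: (H s) => _ [].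
Qed.

Lemma sym_pd (D : pep_desc R p q) F G :
  agents_equiv_pd lm lp n D -> pd_feas lm lp D F G ->
  pd_feas lm lp D (symF F) (symG G) /\
  si_eval (pd_obj D) (symF F) (symG G) = si_eval (pd_obj D) F G.
Proof.
move=> Heq HF.
have cl := @perm_closure R n p q (pd_feas lm lp D) (si_eval (pd_obj D)) Heq.
have cls : forall s, pd_feas lm lp D (actF s F) (actG s G) by move=> s; case: (cl s F G HF).
split; last first.
  rewrite si_sym (@avgR_ext _ _ _ (fun _ => si_eval (pd_obj D) F G)) ?avgR_cst //.
  by move=> s; case: (cl s F G HF).
split; [|split; [|split; [|split; [|split]]]].
- apply: psd_blocks_avg => s; by case: (cls s).
- move=> k i; rewrite sa_sym; apply: psd_avg => s; by case: (cls s) => _ [].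
- move=> k; rewrite si_sym.
  apply: (le_trans (@avgR_le _ _ _ (fun _ => (pd_si k).2) _)); last by rewrite avgR_cst.
  by move=> s; case: (cls s) => _ [_ []].
- move=> k i j /=.
  rewrite !symG_E -!avgRB -avgRD (@avgR_ext _ _ _ (fun _ => 0)) ?avgR_cst // => s.
  by case: (cls s) => _ [_ [_ [/(_ k i j) /= ->]]].
- move=> k /=.
  rewrite (_ : \sum_i _ = avgR (fun s => \sum_i \sum_j actG s G i j (pd_opt k) (pd_opt k))).
    rewrite (@avgR_ext _ _ _ (fun _ => 0)) ?avgR_cst // => s.
    by case: (cls s) => _ [_ [_ [_ [/(_ k) /= ->]]]].
  rewrite avgR_sum; apply: eq_bigr => i _; rewrite avgR_sum; apply: eq_bigr => j _.
  by rewrite symG_E.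
- move=> k; apply: cons_sym => s; by case: (cls s) => _ [_ [_ [_ [_ /(_ k)]]]].
Qed.

End Part2sym.


Section Part2blk.
Variables (R : realType) (lm lp : R) (n p q : nat).
Hypothesis n2 : (2 <= n)%N.
Local Notation nR := (n%:R : R).

Lemma nR_gt1 : 1 < nR.
Proof. by rewrite ltr1n. Qed.
Lemma nR_neq0 : nR != 0.
Proof. rewrite gt_eqF //; apply: lt_trans nR_gt1; exact: ltr01. Qed.
Lemma nR1_neq0 : nR - 1 != 0.
Proof. by rewrite subr_eq0 gt_eqF // nR_gt1. Qed.

Lemma sum2_if (x y : R) :
  \sum_(i < n) \sum_(j < n) (if i == j then x else y) = nR * x + nR * (nR - 1) * y.
Proof.
have E : forall i : 'I_n, \sum_(j < n) (if i == j then x else y) = x - y + nR * y.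
  move=> i; rewrite (bigD1 i) //= eqxx.
  rewrite (eq_bigr (fun _ => y)); last by move=> j /negbTE; rewrite eq_sym => ->.
  have H : \sum_(j < n) y = y + \sum_(j < n | j != i) y by rewrite (bigD1 i).
  rewrite sumr_const card_ord -mulr_natl in H.
  have -> : \sum_(i0 < n | i0 != i) y = nR * y - y by rewrite H; ring.
  ring.
under eq_bigr => i _ do rewrite E.
rewrite sumr_const card_ord -mulr_natl; ring.
Qed.

Lemma sum2_blkf (GA GC : 'M[R]_p) (f : 'M[R]_p -> R) :
  \sum_i \sum_j f (@blkG R n p GA GC i j) = nR * f GA + nR * (nR - 1) * f GC.
Proof.
rewrite -sum2_if; apply: eq_bigr => i _; apply: eq_bigr => j _.
by rewrite /blkG; case: (i == j).
Qed.

Variables (fA : 'rV[R]_q) (GA GC GM : 'M[R]_p).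
Hypothesis HE : forall a b, GM a b = nR^-1 * (GA a b + (nR - 1) * GC a b).
Local Notation G := (@blkG R n p GA GC).
Local Notation F := (fun _ : 'I_n => fA).

Lemma avgF_blk a : avgF F a = fA 0 a.
Proof.
rewrite /avgF sumr_const card_ord -[fA 0 a *+ n]mulr_natl mulrA mulVf ?mul1r //; exact: nR_neq0.
Qed.

Lemma gramA_blk a b : gramA G a b = GA a b.
Proof.
rewrite /gramA /blkG.
under eq_bigr => i _ do rewrite eqxx.
rewrite sumr_const card_ord -[GA a b *+ n]mulr_natl mulrA mulVf ?mul1r //; exact: nR_neq0.
Qed.

Lemma sumG_blk a b : \sum_i \sum_j G i j a b = nR * nR * GM a b.
Proof.
have := sum2_blkf GA GC (fun M => M a b) => /= ->.
rewrite HE; field; exact: nR_neq0.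
Qed.

Lemma gramM_blk a b : gramM G a b = GM a b.
Proof.
rewrite /gramM sumG_blk; field; exact: nR_neq0.
Qed.

Lemma si_blk (h : si_expr R p q) : si_eval h F G = si_red h fA GA GM.
Proof.
rewrite /si_eval /si_red; congr (_ + _).
  by apply: eq_bigr => a _; rewrite avgF_blk.
apply: eq_bigr => a _; apply: eq_bigr => b _; by rewrite gramA_blk gramM_blk.
Qed.

Lemma perp_blk u v : perp_gram G u v = nR * (GA u v - GM u v).
Proof.
rewrite /perp_gram sumG_blk /blkG.
under eq_bigr => i _ do rewrite eqxx.
rewrite sumr_const card_ord -mulr_natl; field; exact: nR_neq0.
Qed.

Lemma perp_mx_blk m (x y : 'I_m -> 'I_p) :
  \matrix_(k, l) perp_gram G (x k) (y l) = nR *: \matrix_(k, l) (GA - GM) (x k) (y l).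
Proof. by apply/matrixP => k l; rewrite !mxE perp_blk. Qed.

Lemma cons_blk (c : cons_block p) : cons_ok lm lp c G <-> cons_red_ok lm lp c GA GM.
Proof.
rewrite /cons_ok /cons_red_ok !perp_mx_blk.
have E : forall (YY YX XY XX : 'M[R]_(cb_K c)),
   - (nR *: YY - lp *: (nR *: YX) - lm *: (nR *: XY) + (lm * lp) *: (nR *: XX))
  = nR *: (- (YY - lp *: YX - lm *: XY + (lm * lp) *: XX)).
  by move=> YY YX XY XX; apply/matrixP => i j; rewrite !mxE; ring.
have nR0 : 0 < nR by apply: lt_trans nR_gt1.
have S : forall k : 'I_(cb_K c), \sum_i \sum_j (G i j (cb_x k) (cb_x k) - G i j (cb_x k) (cb_y k)
                            - G i j (cb_y k) (cb_x k) + G i j (cb_y k) (cb_y k))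
   = nR * nR * (GM (cb_x k) (cb_x k) - GM (cb_x k) (cb_y k)
             - GM (cb_y k) (cb_x k) + GM (cb_y k) (cb_y k)).
  move=> k.
  have := sum2_blkf GA GC (fun M => M (cb_x k) (cb_x k) - M (cb_x k) (cb_y k)
                            - M (cb_y k) (cb_x k) + M (cb_y k) (cb_y k)) => /= ->.
  rewrite !HE; field; exact: nR_neq0.
rewrite E; split.
- move=> [H1 [H2 H3]]; split; last split.
  + move=> k; have := H1 k; rewrite S => /eqP; rewrite !mulf_eq0 orbb (negbTE nR_neq0) /=.
    by move/eqP.
  + exact: psd_scale H2.
  + by apply: (@scalerI _ _ nR); [exact: nR_neq0 | ].
- move=> [H1 [H2 H3]]; split; last split.
  + by move=> k; rewrite S H1 mulr0.
  + by apply: psd_scaleW => //; exact: ltW.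
  + by rewrite H3.
Qed.

Lemma nR_gt0 : 0 < nR.
Proof. by apply: lt_trans nR_gt1; exact: ltr01. Qed.
Lemma nR1_gt0 : 0 < nR - 1.
Proof. by rewrite subr_gt0 nR_gt1. Qed.

Lemma psd_part :
  [/\ GA^T = GA, GC^T = GC, psd (GA - GC) & psd (GA + (n.-1)%:R *: GC)] <->
  GA^T = GA /\ GM^T = GM /\ psd GM /\ psd (GA - GM).
Proof.
have M1 : GA + (n.-1)%:R *: GC = nR *: GM.
  apply/matrixP => a b; rewrite !mxE n1E // HE; field; exact: nR_neq0.
have M2 : (nR - 1) *: (GA - GC) = nR *: (GA - GM).
  apply/matrixP => a b; rewrite !mxE HE; field; exact: nR_neq0.
have HC : forall a b, GC a b = (nR - 1)^-1 * (nR * GM a b - GA a b).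
  move=> a b; rewrite HE; field; by rewrite nR_neq0 nR1_neq0.
split.
- move=> [SA SC H1 H2].
  have SAe : forall a b, GA b a = GA a b.
    by move=> a b; move/matrixP: SA => /(_ a b); rewrite mxE.
  have SCe : forall a b, GC b a = GC a b.
    by move=> a b; move/matrixP: SC => /(_ a b); rewrite mxE.
  split => //; split.
    by apply/matrixP => a b; rewrite mxE !HE SAe SCe.
  split.
    by apply: (psd_scale nR_gt0); rewrite -M1.
  apply: (psd_scale nR_gt0); rewrite -M2; apply: psd_scaleW => //; exact: ltW nR1_gt0.
- move=> [SA [SM [H1 H2]]].
  have SAe : forall a b, GA b a = GA a b.
    by move=> a b; move/matrixP: SA => /(_ a b); rewrite mxE.
  have SMe : forall a b, GM b a = GM a b.
    by move=> a b; move/matrixP: SM => /(_ a b); rewrite mxE.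
  split => //.
  + by apply/matrixP => a b; rewrite mxE !HC SAe SMe.
  + apply: (psd_scale nR1_gt0); rewrite M2; apply: psd_scaleW => //; exact: ltW nR_gt0.
  + by rewrite M1; apply: psd_scaleW => //; exact: ltW nR_gt0.
Qed.

Lemma com_blk a :
  (forall i j : 'I_n, G i i a a - G i j a a - G j i a a + G j j a a = 0) <->
  GA a a - GM a a = 0.
Proof.
have n0 : (0 < n)%N by apply: leq_trans n2.
pose i0 : 'I_n := Ordinal n0.
pose i1 : 'I_n := Ordinal n2.
split.
- move=> /(_ i0 i1); rewrite /blkG /= => H.
  have E : GC a a = GA a a by lra.
  rewrite HE E; field; exact: nR_neq0.
- move=> H.
  have E1 : (nR - 1) * (GA a a - GC a a) = nR * (GA a a - GM a a).
    rewrite HE; field; exact: nR_neq0.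
  rewrite H mulr0 in E1; move/eqP: E1; rewrite mulf_eq0 (negbTE nR1_neq0) /= subr_eq0 => /eqP E.
  move=> i j; rewrite /blkG !eqxx; case: (i == j); case: (j == i); rewrite /= -?E; ring.
Qed.

Lemma opt_blk a : \sum_i \sum_j G i j a a = 0 <-> GM a a = 0.
Proof.
rewrite sumG_blk; split; last by move=> ->; rewrite mulr0.
by move/eqP; rewrite !mulf_eq0 (negbTE nR_neq0) /= => /eqP.
Qed.

Lemma pd_feas_blk (D : pep_desc R p q) :
  pd_feas lm lp D F G <-> pd_red_feas lm lp D fA GA GM.
Proof.
have n0 : (0 < n)%N by apply: leq_trans n2.
pose i0 : 'I_n := Ordinal n0.
rewrite /pd_feas /pd_red_feas psd_blocks_blk // psd_part.
split.
- move=> [[SA [SM [PM PAM]]] [Hsa [Hsi [Hcom [Hopt Hcons]]]]].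
  do 4!split => //; split; last split; last split; last split.
  + by move=> k; have := Hsa k i0; rewrite /blkG eqxx.
  + by move=> k; rewrite -si_blk; exact: Hsi.
  + by move=> k /=; apply/com_blk => i j; exact: Hcom k i j.
  + by move=> k /=; apply/opt_blk; exact: Hopt k.
  + by move=> k; apply/cons_blk; exact: Hcons k.
- move=> [SA [SM [PM [PAM [Hsa [Hsi [Hcom [Hopt Hcons]]]]]]]].
  split; first by [].
  split; last split; last split; last split.
  + by move=> k i; rewrite /blkG eqxx; exact: Hsa.
  + by move=> k; rewrite si_blk; exact: Hsi.
  + by move=> k i j /=; move: i j; apply/com_blk; exact: Hcom k.
  + by move=> k /=; apply/opt_blk; exact: Hopt k.
  + by move=> k; apply/cons_blk; exact: Hcons k.
Qed.

End Part2blk.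


Theorem part2 (R : realType) (lm lp : R) (p q : nat) (D : pep_desc R p q) (n : nat) :
  (2 <= n)%N -> agents_equiv_pd lm lp n D -> w_pd lm lp n D = w_pd_red lm lp D.
Proof.
move=> n2 Heq; rewrite /w_pd /w_pd_red; congr ereal_sup.
rewrite predeqE => x; split.
- move=> [[F G] /= HF <-].
  have [HS HO] := sym_pd Heq HF.
  have [fA [GA [GC [EF EG]]]] := sym_is_blk n2 F G.
  pose GM := (n%:R : R)^-1 *: (GA + (n%:R - 1) *: GC).
  have HE : forall a b, GM a b = (n%:R)^-1 * (GA a b + (n%:R - 1) * GC a b).
    by move=> a b; rewrite !mxE.
  exists (fA, GA, GM) => /=.
    by apply/(pd_feas_blk lm lp n2 fA HE); rewrite -EF -EG.
  by rewrite -(si_blk n2 fA HE) -EF -EG HO.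
- move=> [[[fA GA] GM] /= HF <-].
  pose GC := ((n%:R : R) - 1)^-1 *: (n%:R *: GM - GA).
  have HE : forall a b, GM a b = (n%:R)^-1 * (GA a b + (n%:R - 1) * GC a b).
    move=> a b; rewrite !mxE; field.
    by rewrite (nR_neq0 _ n2) (nR1_neq0 _ n2).
  exists ((fun _ => fA), @blkG R n p GA GC) => /=.
    exact/(pd_feas_blk lm lp n2 fA HE).
  by rewrite (si_blk n2 fA HE).
Qed.


Theorem theorem3 (R : realType) (lm lp : R) :
  -1 < lm -> lm <= lp -> lp < 1 ->
  (* 1. the PEP value equals that of the SDP in (fA, GA, GC) *)
  (forall (n p q : nat) (P : gen_pep R n p q),
      (2 <= n)%N -> agents_equiv_gen P ->
      w_gen P = w_gen_red P)
  /\
  (* 2. scale-invariant objective, single-agent / scale-invariant initial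
        conditions: the SDP (and hence w(S_n)) does not depend on n *)
  (forall (p q : nat) (D : pep_desc R p q) (n : nat),
      (2 <= n)%N -> agents_equiv_pd lm lp n D ->
      w_pd lm lp n D = w_pd_red lm lp D).
Proof.
move=> _ _ _; split.
- move=> n p q P n2 Heq; have H := part1 n2 Heq; exact H.
- move=> p q D n n2 Heq; have H := part2 n2 Heq; exact H.
Qed.
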